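(* Let $n\ge3$, $\mu\in\mathbb{C}$, and let $\lambda=(\lambda_1,\dots,\lambda_n)\in\mathbb{C}^n$ satisfy $\lambda_1-\lambda_2=\cdots=\lambda_{n-2}-\lambda_{n-1}=\mu$ and $\sigma:=\lambda_{n-1}-\lambda_n\notin\mathbb{N}$. Then the element $$u_\lambda=(x_1x_2\cdots x_n)^{\mu}\sum_{i_1,\dots,i_{n-1}=0}^{\infty}\frac{(-1)^{i_1+\cdots+i_{n-1}}\langle\mu\rangle_{i_{n-1}}}{i_1!\cdots i_{n-1}!\,\langle\sigma\rangle_{i_{n-1}}}\,E_{2,1}^{i_1}E_{3,2}^{i_2}\cdots E_{n,n-1}^{i_{n-1}}v_\lambda\; x_1^{i_1}x_2^{i_2-i_1}\cdots x_{n-1}^{i_{n-1}-i_{n-2}}x_n^{-i_{n-1}}$$ of $\widetilde M$ is a singular vector of weight $\lambda$: $E_{i,j}u_\lambda=0$ for all $1\le i<j\le n$ and $E_{k,k}u_\lambda=\lambda_ku_\lambda$ for all $k$.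
   Context: $gl(n)$ has basis of matrix units $E_{i,j}$. $\langle c\rangle_i=c(c-1)\cdots(c-i+1)$, $\langle c\rangle_0=1$. $M_\lambda$ is the Verma $gl(n)$-module with highest weight vector $v_\lambda$: $E_{i,j}v_\lambda=0$ for $i<j$, $E_{k,k}v_\lambda=\lambda_kv_\lambda$. $\widetilde M$ is the space of formal series $\sum_{\vec i\in\mathbb{Z}^n}v_{\vec i}\,x_1^{i_1+\mu}\cdots x_n^{i_n+\mu}$ with $v_{\vec i}\in M_\lambda$ arbitrary, a $gl(n)$-module via $E_{j_1,j_2}(v\,x^m)=E_{j_1,j_2}(v)\,x^m+v\,(x_{j_1}\partial_{x_{j_2}}-\mu\delta_{j_1,j_2})(x^m)$ (isomorphic to the weight-completed tensor product of $M_\lambda$ with the point representation $E_{i,j}\mapsto x_i\partial_{x_j}-\mu\delta_{i,j}$). *)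

(* Defs.v *)
From HB Require Import structures.
From mathcomp Require Import all_boot all_order all_algebra.
From mathcomp Require Import complex reals.
From Stdlib Require Import ClassicalEpsilon.

Set Implicit Arguments.
Unset Strict Implicit.
Unset Printing Implicit Defensive.

Import Order.TTheory GRing.Theory Num.Theory.
Local Open Scope ring_scope.

Section GlModules.
(* Throughout this section the Lie algebra is gl(n+1): indices are 'I_n.+1
   (0-indexed), and the summation indices i_1..i_n are 'I_n. *)
Variables (K : fieldType) (n : nat).
Local Notation N := n.+1.

Definition falling (c : K) (i : nat) : K := \prod_(k < i) (c - k%:R).

Definition gl_action (V : lmodType K) (E : 'I_N -> 'I_N -> V -> V) : Prop :=
  (forall a b (k : K) (u w : V), E a b (k *: u + w) = k *: E a b u + E a b w) /\
  (forall a b c d (u : V),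
     E a b (E c d u) - E c d (E a b u)
     = (b == c)%:R *: E a d u - (d == a)%:R *: E c b u).

Definition hw_vector (V : lmodType K) (E : 'I_N -> 'I_N -> V -> V)
    (lam : 'I_N -> K) (w : V) : Prop :=
  (forall a b : 'I_N, (a < b)%N -> E a b w = 0) /\
  (forall k : 'I_N, E k k w = lam k *: w).

(* (V, E, v) is the Verma module M_lam with highest weight vector v_lam = v:
   characterised by its universal property: for every gl(N)-module W and every
   w in W with n^+ w = 0 and weight lam, there is a unique module morphism
   V -> W sending v to w. *)
Definition is_verma (V : lmodType K) (E : 'I_N -> 'I_N -> V -> V)
    (lam : 'I_N -> K) (v : V) : Prop :=
  gl_action E /\ hw_vector E lam v /\
  forall (W : lmodType K) (F : 'I_N -> 'I_N -> W -> W) (w : W),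
    gl_action F -> hw_vector F lam w ->
    exists phi : V -> W,
      ((forall (k : K) (x y : V), phi (k *: x + y) = k *: phi x + phi y) /\
       (forall a b (x : V), phi (E a b x) = F a b (phi x)) /\ phi v = w) /\
      (forall psi : V -> W,
         ((forall (k : K) (x y : V), psi (k *: x + y) = k *: psi x + psi y) /\
          (forall a b (x : V), psi (E a b x) = F a b (psi x)) /\ psi v = w) ->
         forall x, psi x = phi x).

(* Exponent vectors in Z^n; an element f of M~ is the formal series
   sum_m f(m) x_1^{m_1+mu} ... x_n^{m_n+mu}, with arbitrary f(m) in V. *)
Definition expo := {ffun 'I_N -> int}.
Definition tseries (V : lmodType K) := expo -> V.

Definition shiftv (a b : 'I_N) (m : expo) : expo :=
  [ffun k => m k - (k == a)%:R + (k == b)%:R].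

(* Action of E_{a,b} on M~:  E_{a,b}(v x^p) = E_{a,b}(v) x^p
   + v (x_a d/dx_b - mu delta_ab)(x^p), extended termwise.  With p = m' + mu,
   x_a d/dx_b x^p = (m'_b + mu) x^{p + e_a - e_b}, so the coefficient at m
   receives (m'_b + mu) f(m') with m' = m - e_a + e_b. *)
Definition tact (V : lmodType K) (E : 'I_N -> 'I_N -> V -> V) (mu : K)
    (a b : 'I_N) (f : tseries V) : tseries V :=
  fun m => E a b (f m)
           + (((shiftv a b m) b)%:~R + mu) *: f (shiftv a b m)
           - ((a == b)%:R * mu) *: f m.

Definition sidx := {ffun 'I_n -> nat}.

Definition iext (i : sidx) (k : nat) : nat :=
  if insub k is Some k' then i k' else 0%N.

Definition uexp (i : sidx) : expo :=
  [ffun k : 'I_N => (iext i k)%:Z - (if nat_of_ord k is k'.+1 then iext i k' else 0%N)%:Z].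

(* E_{2,1}^{i_1} E_{3,2}^{i_2} ... E_{n+1,n}^{i_n} w  (1-indexed) *)
Definition pbw (V : lmodType K) (E : 'I_N -> 'I_N -> V -> V) (i : sidx)
    (w : V) : V :=
  foldr (fun k (x : V) => iter (i k) (E (inord k.+1) (inord k)) x) w
        (enum 'I_n).

Definition ucoef (mu sigma : K) (i : sidx) : K :=
  (-1) ^+ (\sum_k i k) * falling mu (iext i n.-1)
  / ((\prod_k (i k)`!)%:R * falling sigma (iext i n.-1)).

(* u_lambda as an element of M~: the coefficient of x^{m+mu} is the term
   whose index i satisfies uexp i = m (uexp is injective, so there is at most
   one), and 0 if there is none. *)
Definition ulam (V : lmodType K) (E : 'I_N -> 'I_N -> V -> V) (mu sigma : K)
    (v : V) : tseries V :=
  fun m =>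
    match excluded_middle_informative (exists i : sidx, uexp i = m) with
    | left H => let i := proj1_sig (constructive_indefinite_description _ H) in
                ucoef mu sigma i *: pbw E i v
    | right _ => 0
    end.

End GlModules.

(* Main.v *)
Require Import Defs.
From HB Require Import structures.
From mathcomp Require Import all_boot all_order all_algebra.
From mathcomp Require Import complex reals.
From mathcomp Require Import ring zify.
From Stdlib Require Import ClassicalEpsilon.

Set Implicit Arguments.
Unset Strict Implicit.
Unset Printing Implicit Defensive.
Import Order.TTheory GRing.Theory Num.Theory.
Local Open Scope ring_scope.

Section GL.
Variables (K : numFieldType) (n : nat) (V : lmodType K).
Variable (E : 'I_n.+1 -> 'I_n.+1 -> V -> V).
Hypothesis hE : gl_action E.

Lemma E0 a b : E a b 0 = 0.
Proof.
have := hE.1 a b 1 0 0; rewrite scaler0 addr0 scale1r => h.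
by apply: (addrI (E a b 0)); rewrite addr0 -h.
Qed.

Lemma ED a b x y : E a b (x + y) = E a b x + E a b y.
Proof. by have := hE.1 a b 1 x y; rewrite !scale1r. Qed.

Lemma EZ a b k x : E a b (k *: x) = k *: E a b x.
Proof. by have := hE.1 a b k x 0; rewrite !addr0 E0 addr0. Qed.

Lemma EN a b x : E a b (- x) = - E a b x.
Proof. by rewrite -scaleN1r EZ scaleN1r. Qed.

Lemma EB a b x y : E a b (x - y) = E a b x - E a b y.
Proof. by rewrite ED EN. Qed.

Lemma Ecommute a b c d x : b != c -> d != a ->
  E a b (E c d x) = E c d (E a b x).
Proof.
move=> /negbTE h1 /negbTE h2; apply/eqP; rewrite -subr_eq0.
by rewrite hE.2 h1 h2 !scale0r subr0.
Qed.

Lemma iterEZ r c d k x : iter r (E c d) (k *: x) = k *: iter r (E c d) x.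
Proof. by elim: r => //= r ->; rewrite EZ. Qed.

Lemma iterE_comm r a b c d x : b != c -> d != a ->
  E a b (iter r (E c d) x) = iter r (E c d) (E a b x).
Proof. by move=> h1 h2; elim: r => //= r <-; rewrite Ecommute. Qed.

Definition isw (x : V) (w : 'I_n.+1 -> K) := forall k, E k k x = w k *: x.

Lemma isw_eq x w w' : (forall k, w k = w' k) -> isw x w -> isw x w'.
Proof. by move=> h hw k; rewrite hw h. Qed.

Lemma isw_E c d x w : isw x w ->
  isw (E c d x) (fun k => w k + (k == c)%:R - (k == d)%:R).
Proof.
move=> hw k.
have := hE.2 k k c d x.
have -> : (k == c)%:R *: E k d x = (k == c)%:R *: E c d x.
  by case: eqP => [->|]; rewrite ?scale0r.
have -> : (d == k)%:R *: E c k x = (k == d)%:R *: E c d x.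
  by rewrite eq_sym; case: eqP => [->|]; rewrite ?scale0r.
rewrite hw EZ => /eqP; rewrite subr_eq => /eqP ->.
by rewrite scalerBl scalerDl addrC addrA.
Qed.

Lemma isw_iter r c d x w : isw x w ->
  isw (iter r (E c d) x) (fun k => w k + r%:R * ((k == c)%:R - (k == d)%:R)).
Proof.
move=> hw; elim: r => [|r IH] /=.
  by apply: isw_eq hw => k; rewrite mul0r addr0.
apply: isw_eq (isw_E c d IH) => k; rewrite mulrSr; ring.
Qed.

Lemma sl2 a b y w : a != b -> E a b y = 0 -> isw y w -> forall k,
  E a b (iter k (E b a) y) =
  (k%:R * (w a - w b - k%:R + 1)) *: iter k.-1 (E b a) y.
Proof.
move=> hab hy hw; elim=> [|k IH] /=; first by rewrite hy mul0r scale0r.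
have := hE.2 a b b a (iter k (E b a) y).
rewrite eqxx eq_refl !scale1r => /eqP; rewrite subr_eq => /eqP ->.
rewrite IH EZ.
have hz := isw_iter k b a hw.
rewrite hz [E b b _]hz (negbTE hab) eq_sym (negbTE hab) !eqxx.
have -> : (k%:R * (w a - w b - k%:R + 1)) *: E b a (iter k.-1 (E b a) y)
  = (k%:R * (w a - w b - k%:R + 1)) *: iter k (E b a) y.
  by case: (k) => [|k']; rewrite ?mul0r ?scale0r.
rewrite -!scalerBl -scalerDl; congr (_ *: _).
rewrite -[k.+1]addn1 natrD /=; ring.
Qed.

Lemma shiftvE a b (e : expo n) k :
  shiftv a b e k = e k - (k == a)%:R + (k == b)%:R.
Proof. by rewrite ffunE. Qed.

Lemma shiftvK a b (e : expo n) : shiftv a b (shiftv b a e) = e.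
Proof. apply/ffunP => k; rewrite !shiftvE; ring. Qed.

Lemma shiftv_comp1 a b c (e : expo n) : shiftv c b (shiftv a c e) = shiftv a b e.
Proof. apply/ffunP => k; rewrite !shiftvE; ring. Qed.

Lemma shiftv_comp2 a b c (e : expo n) : shiftv a c (shiftv c b e) = shiftv a b e.
Proof. apply/ffunP => k; rewrite !shiftvE; ring. Qed.

Lemma ab6 (A X b1 c1 z1 z2 : V) :
  A + X + b1 + (c1 + z1) - (A + c1 + (b1 + z2)) = X + (z1 - z2).
Proof.
rewrite !opprD !addrA.
rewrite [LHS](@GRing.add V).[ACl ((1*6)*(3*8)*(4*7)*(2*(5*9)))].
by rewrite !subrr !add0r addrA.
Qed.

Lemma comb (X A B C Z : V) (al be ga de : K) :
  X + A + be *: B + al *: (C + ga *: Z) - (A + al *: C + be *: (B + de *: Z))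
  = X + (al * ga - be * de) *: Z.
Proof.
rewrite !scalerDr !scalerA scalerBl !opprD !addrA.
rewrite [LHS](@GRing.add V).[ACl ((2*6)*(3*8)*(4*7)*(1*(5*9)))].
by rewrite !subrr !add0r addrA.
Qed.

Variable mu : K.

Lemma tact_comm a b c (f : tseries n V) e : a != b -> a != c -> c != b ->
  tact E mu a b f e =
  tact E mu a c (tact E mu c b f) e - tact E mu c b (tact E mu a c f) e.
Proof.
move=> hab hac hcb; rewrite /tact (negbTE hab) (negbTE hac) (negbTE hcb).
rewrite !mul0r !scale0r !subr0 !ED !EZ !shiftv_comp1 !shiftv_comp2.
have := hE.2 a c c b (f e); rewrite eqxx eq_sym (negbTE hab) scale1r scale0r subr0.
move/eqP; rewrite subr_eq => /eqP ->.
rewrite !shiftvE !eqxx (eq_sym b a) (negbTE hab) (eq_sym c a) (negbTE hac).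
rewrite (eq_sym b c) (negbTE hcb) (addrC (E a b _)) comb.
rewrite [LHS]addrC; congr (_ + _ *: _); rewrite !intrD ?intrN /= ?mulr0z ?mulr1z; ring.
Qed.

Lemma tact0 a b (g : tseries n V) e : (forall e, g e = 0) -> tact E mu a b g e = 0.
Proof. by move=> hg; rewrite /tact !hg E0 !scaler0 subr0 addr0. Qed.

Variables (lam : 'I_n.+1 -> K) (v : V).
Hypothesis hv : hw_vector E lam v.

Definition fstep (i : sidx n) (k : nat) (x : V) :=
  iter (iext i k) (E (inord k.+1) (inord k)) x.
Definition Gs (i : sidx n) j := foldr (fstep i) v (iota j (n - j)).

Lemma iext_ord i (k : 'I_n) : iext i k = i k.
Proof. by rewrite /iext valK. Qed.

Lemma iext_out (i : sidx n) k : (n <= k)%N -> iext i k = 0%N.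
Proof. by move=> h; rewrite /iext insubF // ltnNge h. Qed.

Lemma pbw_G (i : sidx n) : pbw E i v = Gs i 0.
Proof.
rewrite /pbw /Gs subn0 -val_enum_ord foldr_map.
by elim: (enum 'I_n) => //= k s ->; rewrite /fstep iext_ord.
Qed.

Lemma Gs_S (i : sidx n) j : (j < n)%N -> Gs i j = fstep i j (Gs i j.+1).
Proof. by move=> hj; rewrite /Gs -(subnSK hj). Qed.

Lemma Gs_n (i : sidx n) : Gs i n = v.
Proof. by rewrite /Gs subnn. Qed.

Lemma eq_inord (c : 'I_n.+1) x : (x <= n)%N -> (c == inord x) = (val c == x).
Proof. by move=> h; rewrite -val_eqE /= inordK. Qed.

Lemma Gs_w (i : sidx n) j : (j <= n)%N -> isw (Gs i j) (fun c => lam c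
  + (if (j < c)%N then iext i c.-1 else 0%N)%:R
  - (if (j <= c)%N then iext i c else 0%N)%:R).
Proof.
have: forall d j, (n - j = d)%N -> (j <= n)%N -> isw (Gs i j) (fun c => lam c
  + (if (j < c)%N then iext i c.-1 else 0%N)%:R
  - (if (j <= c)%N then iext i c else 0%N)%:R); last by move=> H hj; exact: H.
clear j; elim=> [|d IH] j hd hj.
  have ej : j = n by lia.
  subst j; rewrite Gs_n; apply: isw_eq hv.2 => c.
  have hc := ltn_ord c.
  rewrite ltnNge -ltnS hc /=.
  have -> : (if (n <= c)%N then iext i c else 0%N) = 0%N.
    by case: ifP => // h; rewrite iext_out.
  by rewrite addr0 subr0.
have hjn : (j < n)%N by lia.
rewrite Gs_S //; apply: isw_eq (isw_iter _ _ _ (IH j.+1 _ hjn)); last by lia.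
have hj1 : (j.+1 <= n)%N by lia.
have hj2 : (j <= n)%N by lia.
move=> [c hc]; rewrite !eq_inord //=.
case: (ltngtP c j) => h.
- have h1 : (j < c)%N = false by lia.
  have h2 : (j <= c)%N = false by lia.
  have h3 : (j.+1 < c)%N = false by lia.
  have h4 : (j.+1 <= c)%N = false by lia.
  have h5 : (c == j.+1) = false by lia.
  have h6 : (c == j) = false by lia.
  by rewrite ?h1 ?h2 ?h3 ?h4 ?h5 ?h6 /=; ring.
- have h1 : (j < c)%N = true by lia.
  have h2 : (j <= c)%N = true by lia.
  have h6 : (c == j) = false by lia.
  rewrite ?h1 ?h2 ?h6 /=.
  case: (ltngtP c j.+1) => h'; first by lia.
  + have h3 : (j.+1 < c)%N = true by lia.
    have h4 : (j.+1 <= c)%N = true by lia.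
    have h5 : (c == j.+1) = false by lia.
    by rewrite ?h3 ?h4 ?h5 /=; ring.
  + subst c; rewrite ?ltnn ?leqnn ?eqxx /=; ring.
- subst c; rewrite ?ltnn ?leqnn ?eqxx ?ltnn ?leqnSn.
  have -> : (j == j.+1) = false by lia.
  have -> : (j.+1 < j)%N = false by lia.
  rewrite /= ; ring.
Qed.


Lemma uexpE (i : sidx n) (k : 'I_n.+1) :
  uexp i k = (iext i k)%:Z - (if nat_of_ord k is k'.+1 then iext i k' else 0%N)%:Z.
Proof. by rewrite ffunE. Qed.

Lemma intr_nat (x : nat) : (x%:Z)%:~R = x%:R :> K.
Proof. by rewrite -pmulrn. Qed.

Lemma pbw_w (i : sidx n) : isw (pbw E i v) (fun c => lam c - (uexp i c)%:~R).
Proof.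
rewrite pbw_G; apply: isw_eq (Gs_w i (leq0n n)) => -[c hc].
rewrite uexpE intrB !intr_nat /=.
by case: c hc => [|c] hc /=; ring.
Qed.

Definition dec (i : sidx n) (a : 'I_n) : sidx n := [ffun k => i k - (k == a)]%N.
Definition inc (i : sidx n) (a : 'I_n) : sidx n := [ffun k => i k + (k == a)]%N.

Lemma iext_dec i a k : iext (dec i a) k = (iext i k - (k == nat_of_ord a))%N.
Proof.
rewrite /iext; case: insubP => [k' _ <-|hk]; first by rewrite ffunE.
have : (k == a) = false by apply/eqP => ek; move: hk; rewrite ek ltn_ord.
by move->.
Qed.

Lemma iext_inc i a k : iext (inc i a) k = (iext i k + (k == nat_of_ord a))%N.
Proof.
rewrite /iext; case: insubP => [k' _ <-|hk]; first by rewrite ffunE.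
have : (k == a) = false by apply/eqP => ek; move: hk; rewrite ek ltn_ord.
by move->.
Qed.

Lemma inord_eq x y : (x <= n)%N -> (y <= n)%N ->
  (inord x == inord y :> 'I_n.+1) = (x == y).
Proof. by move=> hx hy; rewrite -val_eqE /= !inordK. Qed.

Section Adj.
Variable a : 'I_n.
Local Notation A := (inord (nat_of_ord a) : 'I_n.+1).
Local Notation B := (inord (nat_of_ord a).+1 : 'I_n.+1).

Lemma ha : (a < n)%N. Proof. exact: ltn_ord. Qed.

Lemma E_Gs_comm (i : sidx n) s x : all (fun k => (k < n)%N && (k != a)) s ->
  E A B (foldr (fstep i) x s) = foldr (fstep i) (E A B x) s.
Proof.
have ha := ha.
elim: s => //= k s IH /andP[/andP[hk hka] hs]; rewrite /fstep iterE_comm ?IH //.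
  by rewrite inord_eq // eqSS eq_sym.
by rewrite inord_eq // ltnW.
Qed.

Lemma foldr_Z (i : sidx n) s k x :
  foldr (fstep i) (k *: x) s = k *: foldr (fstep i) x s.
Proof. by elim: s => //= j s ->; rewrite /fstep iterEZ. Qed.

Lemma foldr_ext (i i' : sidx n) s x : all (fun k => iext i k == iext i' k) s ->
  foldr (fstep i) x s = foldr (fstep i') x s.
Proof. by elim: s => //= k s IH /andP[/eqP h hs]; rewrite /fstep h IH. Qed.

Lemma Gs_split (i : sidx n) j b : (j <= b)%N -> (b <= n)%N ->
  Gs i j = foldr (fstep i) (Gs i b) (iota j (b - j)).
Proof.
move=> h1 h2; rewrite /Gs.
have -> : (n - j = (b - j) + (n - b))%N by lia.
by rewrite iotaD foldr_cat subnKC.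
Qed.

Lemma E_Gs_high (i : sidx n) j : (a < j)%N -> (j <= n)%N -> E A B (Gs i j) = 0.
Proof.
move=> h1 h2; have ha := ha.
rewrite /Gs E_Gs_comm; last first.
  apply/allP => k; rewrite mem_iota => /andP[k1 k2].
  apply/andP; split; first by lia.
  by apply/eqP => ek; move: k1; rewrite ek; lia.
have hlt : (nat_of_ord A < nat_of_ord B)%N.
  rewrite inordK ?inordK //; lia.
rewrite hv.1 //.
by rewrite -(scale0r 0) foldr_Z !scale0r.
Qed.

Lemma E_pbw_adj (i : sidx n) :
  E A B (pbw E i v) = ((i a)%:R * (lam A - lam B + (iext i (nat_of_ord a).+1)%:R
     - (i a)%:R + 1)) *: pbw E (dec i a) v.
Proof.
have ha := ha. have ha' : (a <= n)%N by exact: ltnW.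
rewrite !pbw_G (Gs_split i (j:=0) (b:=a)) //.
rewrite (Gs_split (dec i a) (j:=0) (b:=a)) //.
rewrite E_Gs_comm; last first.
  apply/allP => k; rewrite mem_iota => /andP[k1 k2].
  apply/andP; split; first by lia.
  by apply/eqP => ek; move: k2; rewrite ek; lia.
rewrite Gs_S // [Gs (dec i a) a]Gs_S // [fstep i a _]/fstep [fstep (dec i a) a _]/fstep iext_ord.
have hAB : A != B by rewrite inord_eq //; lia.
rewrite (sl2 hAB (E_Gs_high i (ltnSn a) ha) (Gs_w i ha)) /=.
have h1 : (a < n.+1)%N by lia.
have h2 : (a.+1 < n.+1)%N by lia.
rewrite (inordK h1) (inordK h2) ltnn ltnSn.
have -> : (a.+1 < a)%N = false by lia.
rewrite foldr_Z; congr (_ *: _).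
  by rewrite ltnn /=; ring.
rewrite (iext_dec i a a) iext_ord eqxx subn1.
have -> : Gs (dec i a) a.+1 = Gs i a.+1.
  rewrite /Gs; apply: foldr_ext; apply/allP => k; rewrite mem_iota => /andP[k1 k2].
  rewrite iext_dec; have -> : (k == a) = false by lia.
  by rewrite subn0.
apply: foldr_ext; apply/allP => k; rewrite mem_iota => /andP[k1 k2].
rewrite iext_dec; have -> : (k == a) = false by lia.
by rewrite subn0.
Qed.

Lemma dec_inc (i : sidx n) : dec (inc i a) a = i.
Proof. by apply/ffunP => k; rewrite !ffunE addnK. Qed.

Lemma inc_dec (i : sidx n) : (0 < i a)%N -> inc (dec i a) a = i.
Proof.
move=> h; apply/ffunP => k; rewrite !ffunE.
by case: eqP => [->|] /=; rewrite ?subn0 ?addn0 // subn1 addn1 prednK.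
Qed.

Lemma uexp_inc (i : sidx n) : uexp (inc i a) = shiftv B A (uexp i).
Proof.
have ha := ha.
apply/ffunP => -[k hk]; rewrite shiftvE !uexpE /=.
rewrite !eq_inord //=; last by lia.
case: k hk => [|k] hk /=; rewrite !iext_inc.
  case: (0 =P nat_of_ord a) => [e|ne]; rewrite /= ?e ?subr0; lia.
case: (k =P nat_of_ord a) => [e|ne].
  rewrite e eqxx /=; have -> : (a.+1 == a) = false by lia.
  rewrite /=; lia.
have -> : (k.+1 == a.+1) = false by apply/eqP; lia.
case: (k.+1 =P nat_of_ord a) => [e|ne'] /=; lia.
Qed.

End Adj.

Lemma uexp_inj : injective (@uexp n).
Proof.
move=> i j h.
have H : forall k, (k <= n)%N -> iext i k = iext j k.
  elim=> [|k IH] hk.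
    have := congr1 (fun f : expo n => f (inord 0)) h; rewrite !uexpE inordK //=; lia.
  have := congr1 (fun f : expo n => f (inord k.+1)) h; rewrite !uexpE inordK //= IH; last exact: ltnW.
  lia.
by apply/ffunP => k; rewrite -!iext_ord; apply: H; apply: ltnW.
Qed.

Variable sigma : K.

Lemma ulam_at (i : sidx n) : ulam E mu sigma v (uexp i) = ucoef mu sigma i *: pbw E i v.
Proof.
rewrite /ulam; case: excluded_middle_informative => [H|H]; last by case: H; exists i.
by case: constructive_indefinite_description => j /= /uexp_inj ->.
Qed.

Lemma ulam_out e : (forall i, uexp i <> e) -> ulam E mu sigma v e = 0.
Proof.
move=> h; rewrite /ulam; case: excluded_middle_informative => [[i hi]|] //.
by case: (h i).
Qed.

Hypothesis hsn : forall k : nat, sigma != k%:R.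

Lemma falling_neq0 k : falling sigma k != 0.
Proof.
rewrite /falling; apply/prodf_neq0 => j _.
by rewrite subr_eq0 hsn.
Qed.

Lemma fallingS (c : K) k : falling c k.+1 = falling c k * (c - k%:R).
Proof. by rewrite /falling big_ord_recr. Qed.

Lemma sum_inc (i : sidx n) a : (\sum_k (inc i a) k = (\sum_k i k).+1)%N.
Proof.
rewrite (bigD1 a) // [in RHS](bigD1 a) //= ffunE eqxx addn1 addSn; congr (_.+1 + _)%N.
by apply: eq_bigr => k hk; rewrite ffunE (negbTE hk) addn0.
Qed.

Lemma prod_inc (i : sidx n) a :
  (\prod_k ((inc i a) k)`! = (i a).+1 * \prod_k (i k)`!)%N.
Proof.
rewrite (bigD1 a) // [in RHS](bigD1 a) //= ffunE eqxx addn1 factS mulnA.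
congr (_ * _)%N.
by apply: eq_bigr => k hk; rewrite ffunE (negbTE hk) addn0.
Qed.

Lemma prod_neq0 (i : sidx n) : ((\prod_k (i k)`!)%:R : K) != 0.
Proof. by rewrite pnatr_eq0 -lt0n prodn_gt0 // => k; rewrite fact_gt0. Qed.

Hypothesis hmu : forall a : 'I_n, (a < n.-1)%N ->
  lam (inord a) - lam (inord a.+1) = mu.
Hypothesis hsig : forall a : 'I_n, nat_of_ord a = n.-1 ->
  lam (inord a) - lam (inord a.+1) = sigma.

Lemma scal_id (i : sidx n) (a : 'I_n) :
  ucoef mu sigma (inc i a) * ((inc i a a)%:R *
     (lam (inord a) - lam (inord a.+1) + (iext (inc i a) a.+1)%:R - (inc i a a)%:R + 1))
  + (((iext i a.+1)%:Z - (iext i a)%:Z)%:~R + mu) * ucoef mu sigma i = 0.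
Proof.
have ha := ltn_ord a.
rewrite /ucoef sum_inc prod_inc !iext_inc iext_ord ffunE eqxx addn1.
have -> : (a.+1 == a) = false by lia.
rewrite addn0 exprS natrM intrB !intr_nat.
have P0 := prod_neq0 i.
have hp : ((i a).+1%:R : K) != 0 by rewrite pnatr_eq0.
case: (ltngtP a n.-1) => h; last first.
  rewrite hsig // /= addn1 [iext i a.+1]iext_out; last by lia.
  rewrite -h iext_ord fallingS fallingS.
  have F0 := falling_neq0 (i a).
  have hs : sigma - (i a)%:R != 0 by rewrite subr_eq0 hsn.
  rewrite -[(i a).+1]addn1 natrD /=.
  field.
  by rewrite F0 hs /= -[(i a).+1]addn1 natrD in hp *; rewrite hp P0.
- by lia.
rewrite /= addn0.
rewrite hmu //.
have F0 := falling_neq0 (iext i n.-1).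
rewrite -[(i a).+1]addn1 natrD /= in hp *.
field.
by rewrite hp P0 F0.
Qed.

Lemma tact_adj (a : 'I_n) e :
  tact E mu (inord a) (inord a.+1) (ulam E mu sigma v) e = 0.
Proof.
have ha := ltn_ord a.
have hAB : (inord a == inord a.+1 :> 'I_n.+1) = false by rewrite inord_eq //; lia.
rewrite /tact hAB mul0r scale0r subr0.
case: (excluded_middle_informative (exists i, uexp i = e)) => [[i <-]|hn].
- rewrite ulam_at EZ E_pbw_adj scalerA.
  case: (posnP (i a)) => [h0|hpos].
    rewrite h0 mul0r mulr0 scale0r add0r ulam_out ?scaler0 //.
    move=> j hj.
    have : uexp (inc j a) = uexp i by rewrite uexp_inc hj shiftvK.
    by move/uexp_inj => hi; move: h0; rewrite -hi ffunE eqxx addn1.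
  have [i' ->] : exists i', i = inc i' a by exists (dec i a); rewrite inc_dec.
  rewrite uexp_inc shiftvK ulam_at uexpE inordK /=; last by lia.
  rewrite dec_inc !scalerA -scalerDl.
  by rewrite scal_id scale0r.
- have hn' : forall j, uexp j <> shiftv (inord a) (inord a.+1) e.
    move=> j hj; apply: hn; exists (inc j a).
    by rewrite uexp_inc hj shiftvK.
  have hn2 : forall j, uexp j <> e by move=> j hj; apply: hn; exists j.
  by rewrite (ulam_out hn2) (ulam_out hn') E0 scaler0 addr0.
Qed.

Lemma tact_adj0 (a b : 'I_n.+1) e : nat_of_ord b = (a.+1)%N ->
  tact E mu a b (ulam E mu sigma v) e = 0.
Proof.
move=> hb.
have ha : (a < n)%N by have := ltn_ord b; lia.
have ea : a = inord (Ordinal ha) by apply: val_inj; rewrite /= inordK //; lia.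
have eb : b = inord (Ordinal ha).+1 by apply: val_inj; rewrite /= inordK //; lia.
by rewrite ea eb; apply: tact_adj.
Qed.

Lemma tact_upper d : forall (a b : 'I_n.+1), nat_of_ord b = (a + d.+1)%N ->
  forall e, tact E mu a b (ulam E mu sigma v) e = 0.
Proof.
elim: d => [|d IH] a b hb e; first by apply: tact_adj0; lia.
have hbn := ltn_ord b.
have hc : nat_of_ord (inord a.+1 : 'I_n.+1) = a.+1 by rewrite inordK //; lia.
rewrite (tact_comm (c := inord a.+1)); first last.
- by rewrite -val_eqE /= hc; lia.
- by rewrite -val_eqE /= hc; lia.
- by rewrite -val_eqE /=; lia.
rewrite (tact0 a (inord a.+1) (g := tact E mu (inord a.+1) b (ulam E mu sigma v)) e); last first.
  by move=> e'; apply: IH; lia.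
rewrite (tact0 (inord a.+1) b (g := tact E mu a (inord a.+1) (ulam E mu sigma v)) e).
  by rewrite subrr.
by move=> e'; apply: tact_adj0.
Qed.

Lemma tact_lt (a b : 'I_n.+1) e : (a < b)%N ->
  tact E mu a b (ulam E mu sigma v) e = 0.
Proof. move=> h; apply: (tact_upper (d := (b - a.+1)%N)); lia. Qed.

Lemma shiftv_id a (e : expo n) : shiftv a a e = e.
Proof. by apply/ffunP => k; rewrite shiftvE; ring. Qed.

Lemma tact_diag k e :
  tact E mu k k (ulam E mu sigma v) e = lam k *: ulam E mu sigma v e.
Proof.
rewrite /tact eqxx mul1r shiftv_id.
case: (excluded_middle_informative (exists i, uexp i = e)) => [[i <-]|hn].
  rewrite ulam_at EZ pbw_w !scalerA -!scalerDl -scalerBl; congr (_ *: _); ring.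
have hn2 : forall j, uexp j <> e by move=> j hj; apply: hn; exists j.
by rewrite (ulam_out hn2) E0 !scaler0 addr0 subr0.
Qed.

End GL.

(* The paper's n (>= 3) is written m.+3 here; indices are 0-indexed 'I_(m.+3). *)
Theorem lemma3p1 (R : realType) (m : nat)
    (mu : R[i]) (lam : 'I_(m.+3) -> R[i])
    (hlam : forall k : nat, (k.+2 < m.+3)%N ->
              lam (inord k) - lam (inord k.+1) = mu)
    (hsigma : forall k : nat, lam (inord m.+1) - lam (inord m.+2) != k%:R)
    (V : lmodType R[i]) (E : 'I_(m.+3) -> 'I_(m.+3) -> V -> V) (v : V)
    (hV : is_verma E lam v) :
  let sigma := lam (inord m.+1) - lam (inord m.+2) in
  let u := ulam E mu sigma v in
  (forall a b : 'I_(m.+3), (a < b)%N -> forall e, tact E mu a b u e = 0) /\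
  (forall k : 'I_(m.+3), forall e, tact E mu k k u e = lam k *: u e).
Proof.
move=> sigma u.
have hE : gl_action E := hV.1.
have hv : hw_vector E lam v := hV.2.1.
have hmu : forall a : 'I_m.+2, (a < m.+1)%N -> lam (inord a) - lam (inord a.+1) = mu.
  by move=> a ha; apply: hlam; rewrite ltnS.
have hsig : forall a : 'I_m.+2, nat_of_ord a = m.+1 ->
    lam (inord a) - lam (inord a.+1) = sigma.
  by move=> a ->.
split.
  move=> a b hab e; exact: (tact_lt hE hv hsigma hmu hsig e hab).
move=> k e; exact: (tact_diag hE mu hv sigma k e).
Qed.
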